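(* Let $T=(V,E)$ be a tree with $\mathrm{pthin}(T)=2$, and let $\sigma$ be an ordering of $V$ and $S=\{V^0,V^1\}$ a partition of $V$ that are strongly consistent. Let $v_1,v_2,v_3$ be vertices with $v_1<v_2<v_3$ and $\deg(v_2)=3$. Then either the unique simple path from $v_1$ to $v_3$ passes through $v_2$, or some vertex of that path is adjacent to $v_2$.
   Context: For a graph $G=(V,E)$, a linear ordering $<$ of $V$ and a partition of $V$ into classes are called strongly consistent if for every triple $r<s<t$ of vertices with $rt\in E$: if $r$ and $s$ belong to the same class then $st\in E$, and if $s$ and $t$ belong to the same class then $rs\in E$. The proper thinness $\mathrm{pthin}(G)$ is the minimum $k$ such that some ordering and some partition into $k$ classes are strongly consistent. *)

(* Defs.v *)
From mathcomp Require Import all_boot.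
Set Implicit Arguments. Unset Strict Implicit. Unset Printing Implicit Defensive.

Definition simple_graph (T : finType) (e : rel T) : Prop :=
  symmetric e /\ irreflexive e.

Definition simple_path (T : finType) (e : rel T) (u v : T) (p : seq T) : Prop :=
  [/\ path e u p, last u p = v & uniq (u :: p)].

Definition connected_graph (T : finType) (e : rel T) : Prop :=
  forall u v : T, connect e u v.

Definition has_cycle (T : finType) (e : rel T) : Prop :=
  exists (x : T) (p : seq T),
    [/\ 2 <= size p, path e x p, uniq (x :: p) & e (last x p) x].

Definition is_tree (T : finType) (e : rel T) : Prop :=
  [/\ simple_graph e, connected_graph e & ~ has_cycle e].

Definition deg (T : finType) (e : rel T) (v : T) : nat := #|[set w | e v w]|.

(* A linear ordering of V is given by an injective map ord : T -> nat
   (r < s iff ord r < ord s); a partition into k classes by cls : T -> 'I_k. *)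
Definition strongly_consistent (T : finType) (e : rel T) (k : nat)
    (ord : T -> nat) (cls : T -> 'I_k) : Prop :=
  injective ord /\
  forall r s t : T, ord r < ord s -> ord s < ord t -> e r t ->
    (cls r = cls s -> e s t) /\ (cls s = cls t -> e r s).

Definition pthin_le (T : finType) (e : rel T) (k : nat) : Prop :=
  exists (ord : T -> nat) (cls : T -> 'I_k), strongly_consistent e ord cls.

Lemma pthin_exists (T : finType) (e : rel T) : exists k, pthin_le e k.
Proof.
exists #|T|; exists (fun x => nat_of_ord (enum_rank x)), (@enum_rank T).
split.
  move=> x y H; apply: enum_rank_inj; exact: val_inj.
move=> r s t rs st _; split=> [/enum_rank_inj E|/enum_rank_inj E].
  by move: rs; rewrite E ltnn.
by move: st; rewrite E ltnn.
Qed.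

Definition pthin_eq (T : finType) (e : rel T) (k : nat) : Prop :=
  pthin_le e k /\ forall j, j < k -> ~ pthin_le e j.

(* Main.v *)
Require Import Defs.
From mathcomp Require Import all_boot.
From mathcomp Require Import zify.

Lemma cyc3 (T : finType) (e : rel T) x y z :
  e x y -> e y z -> e z x -> x != y -> y != z -> z != x -> has_cycle e.
Proof.
move=> xy yz zx nxy nyz nzx; exists x, [:: y; z]; split=> //=.
  by rewrite xy yz.
rewrite !inE negb_or nxy eq_sym nzx /= nyz //.
Qed.

Lemma cross (T : finType) (e : rel T) (ord : T -> nat) k p : forall x,
  ord x < k -> k < ord (last x p) -> path e x p ->
  {in x :: p, forall y, ord y != k} ->
  exists r t, [/\ r \in x :: p, t \in x :: p, e r t, ord r < k & k < ord t].
Proof.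
elim: p => [|y p IH] x /= hx hl.
  by move=> _ _; lia.
move=> /andP[exy hp] hne.
have hy : ord y != k by apply: hne; rewrite !inE eqxx orbT.
case: (ltnP (ord y) k) => hyk.
  have [r [t [hr ht ert h1 h2]]] := IH y hyk hl hp
    (fun z hz => hne z ltac:(by rewrite inE hz orbT)).
  by exists r, t; split=> //; rewrite in_cons ?hr ?ht orbT.
exists x, y; split; rewrite ?inE ?eqxx ?orbT //.
lia.
Qed.

Lemma I2 (i j k : 'I_2) : i != k -> j != k -> i = j.
Proof.
case: i j k => [i hi] [j hj] [k hk] /=; rewrite /eq_op /= => h1 h2.
apply/val_inj => /=. lia.
Qed.

Theorem corollaryA10 (T : finType) (e : rel T)
    (ord : T -> nat) (cls : T -> 'I_2) (v1 v2 v3 : T) (p : seq T) :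
  is_tree e -> pthin_eq e 2 ->
  strongly_consistent e ord cls ->
  ord v1 < ord v2 -> ord v2 < ord v3 -> deg e v2 = 3 ->
  simple_path e v1 v3 p ->
  v2 \in v1 :: p \/ exists2 w, w \in v1 :: p & e w v2.
Proof.
move=> [[esym eirr] _ nocyc] _ [oinj sc] h12 h23 hdeg [hp hl _].
case: (boolP (v2 \in v1 :: p)) => hin; first by left.
case: (boolP (has (fun w => e w v2) (v1 :: p))) => hhas.
  by right; case/hasP: hhas => w hw ew; exists w.
exfalso.
have nadj : forall w, w \in v1 :: p -> ~~ e w v2.
  by move=> w hw; apply/negP => ew; move/hasP: hhas; apply; exists w.
have neqo : forall x y, x != y -> ord x != ord y.
  by move=> x y; apply: contra => /eqP /oinj ->.
have [r [t [hr ht ert hr2 ht2]]] : exists r t,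
    [/\ r \in v1 :: p, t \in v1 :: p, e r t, ord r < ord v2 & ord v2 < ord t].
  apply: cross => //; first by rewrite hl.
  move=> y hy; apply: neqo; apply: contraNneq hin => <-; exact: hy.
have nrv : ~~ e r v2 by apply: nadj.
have ntv : ~~ e v2 t by rewrite esym; apply: nadj.
have crv : cls r != cls v2.
  apply/eqP => E; have [H _] := sc r v2 t hr2 ht2 ert; by rewrite (H E) in ntv.
have ctv : cls t != cls v2.
  apply/eqP => E; have [_ H] := sc r v2 t hr2 ht2 ert.
  by rewrite (H (Logic.eq_sym E)) in nrv.
have crt : cls r = cls t by apply: I2 crv ctv.
have nbcls : forall a, e v2 a -> cls a = cls v2.
  move=> a ea.
  have nar : a != r by apply: contraNneq nrv => <-; rewrite esym.
  have nat : a != t by apply: contraNneq ntv => <-.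
  have nrt : r != t by apply: contraTneq ert => ->; rewrite eirr.
  apply: (@I2 _ _ (cls r)); last by rewrite eq_sym.
  apply/negP => /eqP E.
  have oar := neqo _ _ nar; have oat := neqo _ _ nat.
  case: (ltnP (ord a) (ord r)) => h1.
    have [H _] := sc a r v2 h1 hr2 ltac:(by rewrite esym).
    by rewrite (H E) in nrv.
  case: (ltnP (ord t) (ord a)) => h2.
    have [_ H] := sc v2 t a ht2 h2 ea.
    by rewrite (H ltac:(by rewrite -crt -E)) in ntv.
  have h1' : ord r < ord a by rewrite ltn_neqAle h1 andbT eq_sym.
  have h2' : ord a < ord t by rewrite ltn_neqAle h2 andbT.
  have [H1 H2] := sc r a t h1' h2' ert.
  apply: nocyc; apply: (@cyc3 T e r a t).
  - by apply: H2; rewrite -crt.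
  - by apply: H1.
  - by rewrite esym.
  - by rewrite eq_sym.
  - exact: nat.
  - by rewrite eq_sym.
(* two distinct neighbours on the same side give a triangle *)
have side : forall a b, e v2 a -> e v2 b -> a != b ->
    ((ord a < ord v2) == (ord b < ord v2)) -> False.
  have key : forall a b, e v2 a -> e v2 b -> a != b -> ord a < ord b ->
      ((ord a < ord v2) == (ord b < ord v2)) -> False.
    move=> a b ea eb nab hab hs.
    have nav : a != v2 by apply: contraTneq ea => ->; rewrite eirr.
    have nbv : b != v2 by apply: contraTneq eb => ->; rewrite eirr.
    have oav := neqo _ _ nav; have obv := neqo _ _ nbv.
    have eab : e a b.
      case: (ltnP (ord b) (ord v2)) hs => hb hs.
        have [_ H] := sc a b v2 hab hb ltac:(by rewrite esym).
        by apply: H; exact: (nbcls _ eb).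
      have ha : ord v2 < ord a.
        rewrite ltn_neqAle eq_sym oav leqNgt; move: hs; try rewrite ltnNge hb.
        by case: (ord a < ord v2).
      have [H _] := sc v2 a b ha hab eb.
      by apply: H; exact: (Logic.eq_sym (nbcls _ ea)).
    apply: nocyc; apply: (@cyc3 T e a b v2) => //.
    by rewrite esym.
    by rewrite eq_sym.
  move=> a b ea eb nab hs.
  case: (ltnP (ord a) (ord b)) => h.
    exact: key ea eb nab h hs.
  have h' : ord b < ord a.
    by rewrite ltn_neqAle h andbT eq_sym; exact: neqo.
  apply: (key b a eb ea) => //; first by rewrite eq_sym.
  by rewrite eq_sym.
have : 2 < #|[set w | e v2 w]| by rewrite -/(deg e v2) hdeg.
case/card_gt2P => [x [y [z [[hx hy hz] [nxy nyz nzx]]]]].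
rewrite !inE in hx hy hz.
case: (boolP ((ord x < ord v2) == (ord y < ord v2))) => s1.
  exact: side hx hy nxy s1.
case: (boolP ((ord y < ord v2) == (ord z < ord v2))) => s2.
  exact: side hy hz nyz s2.
apply: (side z x hz hx nzx).
by move: s1 s2; do 3 case: (_ < ord v2).
Qed.
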